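(* Let $S$ be a finite set and $\mu\colon\mathscr P(S)\to\mathbf Z$ a submodular, non-decreasing function on its power set. Let $P_\mu=\{\mathbf x\in\mathbf R^S\mid \mathbf x\ge\mathbf 0,\ \mathbf x\cdot\mathbf i_U\le\mu(U)\text{ for all }U\subset S\}$ and $B_\mu=\{\mathbf x\in P_\mu\mid \mathbf x\cdot\mathbf i_S=\mu(S)\}$. Write $I_\mu(\xi)=\sum_{j=0}^{|S|-1}a_j\xi^j$ and $X_\mu(\eta)=\sum_{j=0}^{|S|-1}b_j\eta^j$. Then for every non-negative integer $k$, \[\bigl|(B_\mu+k\nabla_S)\cap\mathbf Z^S\bigr|=\sum_{j=0}^{|S|-1}a_j\binom{k+|S|-1-j}{|S|-1-j},\qquad \bigl|(B_\mu+k\Delta_S)\cap\mathbf Z^S\bigr|=\sum_{j=0}^{|S|-1}b_j\binom{k+|S|-1-j}{|S|-1-j}.\]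
   Context: $\mathbf i_U\in\mathbf R^S$ denotes the indicator vector of $U\subset S$; $+$ between sets is Minkowski sum. $\Delta_S=\operatorname{conv}\{\mathbf i_{\{s\}}\mid s\in S\}$ is the standard simplex and $\nabla_S=-\Delta_S=\operatorname{conv}\{-\mathbf i_{\{s\}}\mid s\in S\}$ the inverted simplex. The bases of $\mu$ are the integer points of $B_\mu$. Fix a linear order on $S$. For a basis $\mathbf f$, an element $s\in S$ is internally active if there is no $s'<s$ such that $\mathbf f-\mathbf i_{\{s\}}+\mathbf i_{\{s'\}}$ is a basis, and externally active if there is no $s'<s$ such that $\mathbf f+\mathbf i_{\{s\}}-\mathbf i_{\{s'\}}$ is a basis. Let $\bar\iota(\mathbf f)$, resp. $\bar\epsilon(\mathbf f)$, be $|S|$ minus the number of internally, resp. externally, active elements. The interior and exterior polynomials are $I_\mu(\xi)=\sum_{\mathbf f}\xi^{\bar\iota(\mathbf f)}$ and $X_\mu(\eta)=\sum_{\mathbf f}\eta^{\bar\epsilon(\mathbf f)}$, summed over all bases $\mathbf f$ (their degrees are at most $|S|-1$). *)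

(* Defs.v *)
From mathcomp Require Import all_boot all_order all_algebra.
From mathcomp Require Import reals.
Set Implicit Arguments. Unset Strict Implicit. Unset Printing Implicit Defensive.
Import Order.TTheory GRing.Theory Num.Theory.
Local Open Scope ring_scope.

Section Defs.
Variable S : finType.

Definition submodular (mu : {set S} -> int) : Prop :=
  forall A B : {set S}, mu (A :|: B) + mu (A :&: B) <= mu A + mu B.

Definition mu_nondecreasing (mu : {set S} -> int) : Prop :=
  forall A B : {set S}, A \subset B -> mu A <= mu B.

Definition is_base (mu : {set S} -> int) (f : {ffun S -> int}) : bool :=
  [forall s, 0 <= f s] &&
  [forall U : {set S}, \sum_(s in U) f s <= mu U] &&
  (\sum_(s : S) f s == mu setT).

Definition exch (f : {ffun S -> int}) (s s' : S) : {ffun S -> int} :=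
  [ffun t => f t - (t == s)%:Z + (t == s')%:Z].

(* the linear order on S is  s' < s  iff  r s' < r s, with r injective *)
Definition int_active (r : S -> nat) (mu : {set S} -> int) (f : {ffun S -> int}) (s : S) : bool :=
  ~~ [exists s', (r s' < r s)%N && is_base mu (exch f s s')].

Definition ext_active (r : S -> nat) (mu : {set S} -> int) (f : {ffun S -> int}) (s : S) : bool :=
  ~~ [exists s', (r s' < r s)%N && is_base mu (exch f s' s)].

Definition iota_bar r mu f : nat := (#|S| - #|[set s | int_active r mu f s]|)%N.
Definition eps_bar r mu f : nat := (#|S| - #|[set s | ext_active r mu f s]|)%N.

(* Every basis f satisfies 0 <= f s <= mu [set s], so bases are exactly the
   images of the following finite candidate functions that are bases. *)
Definition bbound (mu : {set S} -> int) : nat := \max_(s : S) `|mu [set s]|%N.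
Definition toZ (N : nat) (g : {ffun S -> 'I_N.+1}) : {ffun S -> int} :=
  [ffun s => ((g s : nat) : int)].

(* a_j : coefficient of xi^j in I_mu ; b_j : coefficient of eta^j in X_mu *)
Definition interior_coef r mu (j : nat) : nat :=
  #|[set g : {ffun S -> 'I_(bbound mu).+1} |
      is_base mu (toZ g) && (iota_bar r mu (toZ g) == j)]|.
Definition exterior_coef r mu (j : nat) : nat :=
  #|[set g : {ffun S -> 'I_(bbound mu).+1} |
      is_base mu (toZ g) && (eps_bar r mu (toZ g) == j)]|.

Variable R : realType.

Definition in_Bmu (mu : {set S} -> int) (x : {ffun S -> R}) : Prop :=
  (forall s, 0 <= x s) /\
  (forall U : {set S}, \sum_(s in U) x s <= (mu U)%:~R) /\
  \sum_(s : S) x s = (mu setT)%:~R.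

Definition in_Delta (d : {ffun S -> R}) : Prop :=
  (forall s, 0 <= d s) /\ \sum_(s : S) d s = 1.
Definition in_Nabla (d : {ffun S -> R}) : Prop :=
  in_Delta [ffun s => - d s].

Definition in_mink (mu : {set S} -> int) (Q : {ffun S -> R} -> Prop) (k : nat)
  (x : {ffun S -> int}) : Prop :=
  exists b d : {ffun S -> R}, in_Bmu mu b /\ Q d /\
    forall s, (x s)%:~R = b s + k%:R * d s.

End Defs.

(* Main.v *)
Require Import Defs.
From mathcomp Require Import all_boot all_order all_algebra.
From mathcomp Require Import reals zify.
Set Implicit Arguments. Unset Strict Implicit. Unset Printing Implicit Defensive.
Import Order.TTheory GRing.Theory Num.Theory.
Local Open Scope ring_scope.

Ltac slia :=
  repeat match goal with H : context [@bigop.body _ _ _ _ _] |- _ => revert H end;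
  repeat match goal with |- context [ @bigop.body ?T ?I ?z ?r ?F ] =>
     let X := fresh "X" in set X := @bigop.body T I z r F; clearbody X;
     lazymatch goal with |- context [ @bigop.body T I z r F ] => fail | _ => idtac end end;
  intros; lia.

Section Poly.
Variable S : finType.
Variable mu : {set S} -> int.
Hypothesis hsub : submodular mu.

Lemma sumT (F : S -> int) : \sum_(s in [set: S]) F s = \sum_s F s.
Proof. by apply: eq_bigl => s; rewrite inE. Qed.

Lemma sumID (F : S -> int) (A B : {set S}) :
  \sum_(s in A) F s = \sum_(s in A :&: B) F s + \sum_(s in A :\: B) F s.
Proof. exact: big_setID. Qed.

Lemma sumUI (F : S -> int) (A B : {set S}) :
  \sum_(s in A :|: B) F s + \sum_(s in A :&: B) F s =
  \sum_(s in A) F s + \sum_(s in B) F s.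
Proof.
rewrite (sumID F (A :|: B) A) (sumID F B A).
rewrite setUK setDUl setDv set0U (setIC B A).
rewrite /=; slia.
Qed.

Lemma sum_compl (F : S -> int) (T : {set S}) :
  \sum_s F s = \sum_(s in T) F s + \sum_(s in ~: T) F s.
Proof. by by rewrite -sumT (sumID F _ T) setTI setTD. Qed.

Lemma sum_delta (U : {set S}) (a : S) :
  \sum_(t in U) ((t == a)%:Z) = (a \in U)%:Z.
Proof.
case: (boolP (a \in U)) => Ha.
  rewrite (bigD1 a) //= eqxx big1 ?addr0 // => t /andP[_ /negbTE ->]; by [].
by rewrite big1 // => t Ht; case: eqP Ht => // ->; rewrite (negbTE Ha).
Qed.

Lemma sum_deltaT (a : S) : \sum_t ((t == a)%:Z) = 1.
Proof. by rewrite -sumT sum_delta inE. Qed.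

Lemma is_baseP (f : {ffun S -> int}) : reflect [/\ (forall s, 0 <= f s),
  (forall U : {set S}, \sum_(s in U) f s <= mu U) & \sum_s f s = mu setT] (is_base mu f).
Proof.
apply: (iffP idP).
  by case/andP=> /andP[/forallP h1 /forallP h2] /eqP h3.
by case=> h1 h2 h3; apply/andP; split; [apply/andP; split; apply/forallP|apply/eqP].
Qed.

Lemma sum_exch (f : {ffun S -> int}) (a b : S) (U : {set S}) :
  \sum_(t in U) exch f a b t = \sum_(t in U) f t - (a \in U)%:Z + (b \in U)%:Z.
Proof.
rewrite -(sum_delta U a) -(sum_delta U b) -sumrB -big_split /=.
by apply: eq_bigr => t _; rewrite /exch ffunE.
Qed.

Definition tight (y : {ffun S -> int}) (U : {set S}) := \sum_(s in U) y s == mu U.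

Lemma tightUI (y : {ffun S -> int}) (hy : forall U : {set S}, \sum_(s in U) y s <= mu U) :
  forall A B : {set S}, tight y A -> tight y B -> tight y (A :|: B) && tight y (A :&: B).
Proof.
move=> A B; rewrite /tight => /eqP hA /eqP hB.
have := sumUI y A B; have := hsub A B; have := hy (A :|: B); have := hy (A :&: B).
move=> h1 h2 h3 h4; apply/andP; split; apply/eqP; slia.
Qed.


Lemma tight_lt (y : {ffun S -> int}) (U : {set S}) : \sum_(s in U) y s <= mu U -> ~~ tight y U ->
  \sum_(s in U) y s + 1 <= mu U.
Proof. by move=> h hn; rewrite lezD1 lt_neqAle hn h. Qed.

Lemma exchE (f g : {ffun S -> int}) s : is_base mu f -> is_base mu g -> f s < g s ->
  exists t, g t < f t /\ is_base mu (exch f t s).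
Proof.
move=> /is_baseP[f0 fU fS] /is_baseP[g0 gU gS] hs.
pose T := \bigcap_(U | tight f U && (s \in U)) U.
have hT : tight f T && (s \in T).
  rewrite /T; apply: (big_ind (fun U => tight f U && (s \in U))).
  - by rewrite /tight sumT fS eqxx inE.
  - move=> A B /andP[tA sA] /andP[tB sB]; have /andP[_ ->] := tightUI fU tA tB.
    by rewrite inE sA sB.
  - by [].
case/andP: hT => /eqP tT sT.
case: (boolP [exists t, [&& t \in T, t != s & g t < f t]]) => [/existsP[t /and3P[tT' tne lt]] | /existsPn hn].
  exists t; split=> //; apply/is_baseP; split.
  - move=> u; rewrite ffunE; have:= f0 u; have := g0 u.
    case: (eqVneq u t) => [->|_]; case: (eqVneq u s) => [eus|_] /=; try slia.
  - move=> U; rewrite sum_exch; have := fU U.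
    case sU: (s \in U); case tU: (t \in U) => /=; try slia.
    have : ~~ tight f U.
      apply/negP=> tU'; have : T \subset U by apply: bigcap_inf; rewrite tU' sU.
      by move/subsetP/(_ t tT'); rewrite tU.
    move=> nt h; have := tight_lt h nt; slia.
  - by rewrite -sumT sum_exch !inE sumT fS; slia.
exfalso.
have h1 : \sum_(u in T | u != s) f u <= \sum_(u in T | u != s) g u.
  apply: ler_sum => u /andP[uT une]; have := hn u; rewrite uT une /= -leNgt; by [].
have := gU T; rewrite (bigD1 s) //=; move: tT; rewrite (bigD1 s) //=; slia.
Qed.

Lemma exchE' (f g : {ffun S -> int}) s : is_base mu f -> is_base mu g -> g s < f s ->
  exists t, f t < g t /\ is_base mu (exch f s t).
Proof.
move=> /is_baseP[f0 fU fS] /is_baseP[g0 gU gS] hs.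
pose T := \bigcup_(U | tight f U && (s \notin U)) U.
have hT : (T == set0) || (tight f T && (s \notin T)).
  rewrite /T; apply: (big_ind (fun U => (U == set0) || (tight f U && (s \notin U)))).
  - by rewrite eqxx.
  - move=> A B /orP[/eqP->|/andP[tA sA]]; first by rewrite set0U.
    move=> /orP[/eqP->|/andP[tB sB]]; first by rewrite setU0 tA sA orbT.
    have /andP[-> _] := tightUI fU tA tB.
    by rewrite inE negb_or sA sB orbT.
  - by move=> U ->; rewrite orbT.
have sT : s \notin T by case/orP: hT => [/eqP->|/andP[]//]; rewrite inE.
have tT : \sum_(u in T) g u <= \sum_(u in T) f u.
  case/orP: hT => [/eqP->|/andP[/eqP -> _]]; last exact: gU.
  by rewrite !big_set0.
case: (boolP [exists t, [&& t \notin T & f t < g t]]) => [/existsP[t /andP[tT' lt]] | /existsPn hn].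
  have tne : t != s by apply/eqP=> ets; move: lt; rewrite ets; slia.
  exists t; split=> //; apply/is_baseP; split.
  - move=> u; rewrite ffunE; have:= f0 u; have := g0 u.
    case: (eqVneq u s) => [->|_]; case: (eqVneq u t) => [eut|_] /=; try slia.
  - move=> U; rewrite sum_exch; have := fU U.
    case sU: (s \in U); case tU: (t \in U) => /=; try slia.
    have : ~~ tight f U.
      apply/negP=> tU'; have : U \subset T by apply: bigcup_sup; rewrite tU' sU.
      by move/subsetP/(_ t tU); rewrite (negbTE tT').
    move=> nt h; have := tight_lt h nt; slia.
  - by rewrite -sumT sum_exch !inE sumT fS; slia.
exfalso.
have sT' : s \in ~: T by rewrite inE.
have h1 : \sum_(u in ~: T | u != s) g u <= \sum_(u in ~: T | u != s) f u.
  apply: ler_sum => u /andP[uT une]; have := hn u; rewrite -in_setC uT /= -leNgt; by [].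
have e1 := sum_compl g T; have e2 := sum_compl f T.
move: e1 e2; rewrite (bigD1 s sT') (bigD1 s sT') /=; slia.
Qed.

Section Augment.
Variable c : S -> int.
Hypothesis HT : forall T : {set S}, mu setT <= mu T + \sum_(s in ~: T) c s.
Hypothesis H0 : mu setT <= \sum_s c s.

Lemma augment m : forall y : {ffun S -> int},
  (forall s, 0 <= y s <= c s) -> (forall U : {set S}, \sum_(s in U) y s <= mu U) ->
  mu setT - \sum_s y s <= m%:Z ->
  exists f, is_base mu f /\ forall s, y s <= f s <= c s.
Proof.
elim: m => [|m IH] y hy hU hm.
  exists y; split; last by move=> s; rewrite lexx; case/andP: (hy s).
  apply/is_baseP; split=> //; first by move=> s; case/andP: (hy s).
  by have := hU setT; rewrite sumT; slia.
case: (boolP (\sum_s y s == mu setT)) => [/eqP e|ne].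
  exists y; split; last by move=> s; rewrite lexx; case/andP: (hy s).
  apply/is_baseP; split=> //; by move=> s; case/andP: (hy s).
have lt : \sum_s y s < mu setT by have := hU setT; rewrite sumT; move/eqP: ne; slia.
case: (boolP [exists s, (y s < c s) && [forall U : {set S}, \sum_(t in U) y t + (s \in U)%:Z <= mu U]]).
  case/existsP=> s /andP[ysc /forallP hs].
  pose y' := [ffun t => y t + (t == s)%:Z].
  have sy' (U : {set S}) : \sum_(t in U) y' t = \sum_(t in U) y t + (s \in U)%:Z.
    by rewrite -(sum_delta U s) -big_split; apply: eq_bigr => t _; rewrite ffunE.
  have [f [fb hf]] : exists f, is_base mu f /\ forall s, y' s <= f s <= c s.
    apply: IH.
    - move=> t; rewrite ffunE; case/andP: (hy t); case: eqP => [->|_] /=; slia.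
    - by move=> U; rewrite sy'.
    - have := sy' setT; rewrite !sumT inE /= => e; move: hm; slia.
  exists f; split=> // t; have := hf t; rewrite ffunE; slia.
move/existsPn=> hn; exfalso.
have tight_of s : y s < c s -> exists U : {set S}, (s \in U) && tight y U.
  move=> ysc; have := hn s; rewrite ysc /= => /forallPn[U].
  rewrite -ltNge => hlt; exists U; have := hU U.
  case sU: (s \in U) => /= h; last slia.
  rewrite /tight; apply/eqP; slia.
pose T := \bigcup_(U | tight y U) U.
have hT : (T == set0) || tight y T.
  rewrite /T; apply: (big_ind (fun U => (U == set0) || tight y U)).
  - by rewrite eqxx.
  - move=> A B /orP[/eqP->|tA]; first by rewrite set0U.
    move=> /orP[/eqP->|tB]; first by rewrite setU0 tA orbT.
    by have /andP[-> _] := tightUI hU tA tB; rewrite orbT.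
  - by move=> U ->; rewrite orbT.
have hc : forall s, s \in ~: T -> y s = c s.
  move=> s; rewrite inE => sT; case/andP: (hy s) => _; rewrite le_eqVlt.
  case/orP=> [/eqP//|/tight_of[U /andP[sU tU]]].
  have : U \subset T by apply: bigcup_sup.
  by move/subsetP/(_ s sU); rewrite (negbTE sT).
have e := sum_compl y T.
have e2 : \sum_(s in ~: T) y s = \sum_(s in ~: T) c s by apply: eq_bigr.
case/orP: hT => [/eqP eT|/eqP tT].
  move: e e2; rewrite eT big_set0 setC0 !sumT => e e2; slia.
have := HT T; slia.
Qed.
End Augment.


Section Good.
Variable r : S -> nat.
Hypothesis r_inj : injective r.

Definition Vz (f : {ffun S -> int}) : int := \sum_s f s * (r s)%:Z.

Lemma sum_delta_w (a : S) (w : S -> int) : \sum_u (u == a)%:Z * w u = w a.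
Proof.
rewrite (bigD1 a) //= eqxx mul1r big1 ?addr0 // => u /negbTE ->; by rewrite mul0r.
Qed.

Lemma Vz_exch f a b : Vz (exch f a b) = Vz f - (r a)%:Z + (r b)%:Z.
Proof.
rewrite /Vz -(sum_delta_w a (fun u => (r u)%:Z)) -(sum_delta_w b (fun u => (r u)%:Z)).
rewrite -sumrB -big_split; apply: eq_bigr => u _.
by rewrite /exch ffunE mulrDl mulrBl.
Qed.

Lemma Vz_ge0 (f : {ffun S -> int}) : (forall s, 0 <= f s) -> 0 <= Vz f.
Proof. by move=> h; apply: sumr_ge0 => s _; apply: mulr_ge0. Qed.

Lemma Vz_le (f g : {ffun S -> int}) : (forall s, f s <= g s) -> Vz f <= Vz g.
Proof. by move=> h; apply: ler_sum => s _; apply: ler_wpM2r. Qed.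

Lemma goodN_ex (x : {ffun S -> int}) m : forall f, is_base mu f -> (forall s, x s <= f s) ->
  Vz f < m%:Z -> exists f', [/\ is_base mu f', (forall s, x s <= f' s) &
    (forall s, x s < f' s -> int_active r mu f' s)].
Proof.
elim: m => [|m IH] f bf hx hV.
  have := Vz_ge0 (f := f); case/is_baseP: bf => h _ _; move/(_ h); slia.
case: (boolP [forall s, (x s < f s) ==> int_active r mu f s]) => [/forallP h|/forallPn[s]].
  by exists f; split=> // s; move/implyP: (h s).
rewrite negb_imply => /andP[xs]; rewrite /int_active negbK => /existsP[s' /andP[rs bs]].
apply: (IH (exch f s s')) => //.
  move=> u; rewrite ffunE; have:= hx u; case: eqP => [->|_]; case: eqP => [->|_] /=; slia.
rewrite Vz_exch; move: hV; slia.
Qed.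

Lemma goodD_ex (x : {ffun S -> int}) m : forall f, is_base mu f -> (forall s, f s <= x s) ->
  Vz x - Vz f < m%:Z -> exists f', [/\ is_base mu f', (forall s, f' s <= x s) &
    (forall s, f' s < x s -> ext_active r mu f' s)].
Proof.
elim: m => [|m IH] f bf hx hV.
  have := Vz_le hx; move: hV; slia.
case: (boolP [forall s, (f s < x s) ==> ext_active r mu f s]) => [/forallP h|/forallPn[s]].
  by exists f; split=> // s; move/implyP: (h s).
rewrite negb_imply => /andP[xs]; rewrite /ext_active negbK => /existsP[s' /andP[rs bs]].
apply: (IH (exch f s' s)) => //.
  move=> u; rewrite ffunE; have:= hx u; case: eqP => [->|_]; case: eqP => [->|_] /=; slia.
rewrite Vz_exch; move: hV; slia.
Qed.

Lemma min_diff (f1 f2 : {ffun S -> int}) : f1 <> f2 ->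
  exists s0, f1 s0 != f2 s0 /\ forall t, f1 t != f2 t -> (r s0 < r t)%N \/ t = s0.
Proof.
move=> ne.
case: (boolP [exists s, f1 s != f2 s]) => [/existsP[s1 ne1]|/existsPn h]; last first.
  by case: ne; apply/ffunP => s; apply/eqP; move: (h s); rewrite negbK.
case: (@arg_minnP S s1 (fun s => f1 s != f2 s) r ne1) => s0 ne0 hmin; exists s0; split=> // t nt.
have := hmin t nt; rewrite leq_eqVlt => /orP[/eqP e|]; last by left.
by right; apply: r_inj.
Qed.

Lemma uniqN_aux (x f1 f2 : {ffun S -> int}) s0 : is_base mu f1 -> is_base mu f2 ->
  (forall s, x s <= f2 s) -> (forall s, x s < f1 s -> int_active r mu f1 s) ->
  f1 s0 < f2 s0 -> (forall t, f1 t != f2 t -> (r s0 < r t)%N \/ t = s0) -> False.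
Proof.
move=> b1 b2 hx2 g1 lt hmin.
have [t [lt2 bt]] := exchE b1 b2 lt.
have nt : f1 t != f2 t by rewrite gt_eqF.
case: (hmin t nt) => [rt|ets]; last by move: lt2 lt; rewrite ets; slia.
have xt : x t < f1 t by have := hx2 t; slia.
have := g1 t xt; rewrite /int_active => /existsPn/(_ s0); by rewrite rt bt.
Qed.

Lemma uniqD_aux (x f1 f2 : {ffun S -> int}) s0 : is_base mu f1 -> is_base mu f2 ->
  (forall s, f2 s <= x s) -> (forall s, f1 s < x s -> ext_active r mu f1 s) ->
  f2 s0 < f1 s0 -> (forall t, f1 t != f2 t -> (r s0 < r t)%N \/ t = s0) -> False.
Proof.
move=> b1 b2 hx2 g1 lt hmin.
have [t [lt2 bt]] := exchE' b1 b2 lt.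
have nt : f1 t != f2 t by rewrite lt_eqF.
case: (hmin t nt) => [rt|ets]; last by move: lt2 lt; rewrite ets; slia.
have xt : f1 t < x t by have := hx2 t; slia.
have := g1 t xt; rewrite /ext_active => /existsPn/(_ s0); by rewrite rt bt.
Qed.

Lemma uniqN (x f1 f2 : {ffun S -> int}) : is_base mu f1 -> is_base mu f2 ->
  (forall s, x s <= f1 s) -> (forall s, x s <= f2 s) ->
  (forall s, x s < f1 s -> int_active r mu f1 s) ->
  (forall s, x s < f2 s -> int_active r mu f2 s) -> f1 = f2.
Proof.
move=> b1 b2 h1 h2 g1 g2; apply/eqP/contraT => /eqP/min_diff[s0 [ne hmin]]; exfalso.
case: (ltgtP (f1 s0) (f2 s0)) => [lt|gt|eq]; last by rewrite eq eqxx in ne.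
  exact: (uniqN_aux b1 b2 h2 g1 lt hmin).
apply: (uniqN_aux b2 b1 h1 g2 gt) => t; rewrite eq_sym; exact: hmin.
Qed.

Lemma uniqD (x f1 f2 : {ffun S -> int}) : is_base mu f1 -> is_base mu f2 ->
  (forall s, f1 s <= x s) -> (forall s, f2 s <= x s) ->
  (forall s, f1 s < x s -> ext_active r mu f1 s) ->
  (forall s, f2 s < x s -> ext_active r mu f2 s) -> f1 = f2.
Proof.
move=> b1 b2 h1 h2 g1 g2; apply/eqP/contraT => /eqP/min_diff[s0 [ne hmin]]; exfalso.
case: (ltgtP (f1 s0) (f2 s0)) => [lt|gt|eq]; last by rewrite eq eqxx in ne.
  apply: (uniqD_aux b2 b1 h1 g2 lt) => t; rewrite eq_sym; exact: hmin.
exact: (uniqD_aux b1 b2 h2 g1 gt hmin).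
Qed.

End Good.
End Poly.
Section Real.
Variable R : realType.
Variable S : finType.
Lemma sum_complR (F : S -> R) (T : {set S}) :
  \sum_s F s = \sum_(s in T) F s + \sum_(s in ~: T) F s.
Proof.
have -> : \sum_s F s = \sum_(s in [set: S]) F s by apply: eq_bigl => s; rewrite inE.
by rewrite (big_setID T) setTI setTD.
Qed.
Lemma intr_sumU (F : S -> int) (U : {set S}) : ((\sum_(s in U) F s)%:~R : R) = \sum_(s in U) (F s)%:~R.
Proof. by rewrite raddf_sum. Qed.
Lemma intr_sumT (F : S -> int) : ((\sum_s F s)%:~R : R) = \sum_s (F s)%:~R.
Proof. by rewrite raddf_sum. Qed.
Lemma sum_deltaR (a : S) : \sum_s ((s == a)%:R : R) = 1.
Proof. rewrite (bigD1 a) //= eqxx big1 ?addr0 // => u /negbTE ->; by []. Qed.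
Variable mu : {set S} -> int.
Hypothesis hsub : submodular mu.

Lemma Hfromb (b : {ffun S -> R}) (c : S -> int) : in_Bmu mu b -> (forall s, b s <= (c s)%:~R) ->
  (forall T : {set S}, mu setT <= mu T + \sum_(s in ~: T) c s) /\ mu setT <= \sum_s c s.
Proof.
case=> b0 [bU bS] hc; split.
  move=> T; rewrite -(ler_int R) intrD intr_sumU -bS (sum_complR _ T).
  by apply: lerD; [exact: bU | apply: ler_sum => s _; exact: hc].
by rewrite -(ler_int R) intr_sumT -bS; apply: ler_sum => s _; exact: hc.
Qed.

Lemma aug_from (b : {ffun S -> R}) (c : S -> int) (y : {ffun S -> int}) :
  in_Bmu mu b -> (forall s, b s <= (c s)%:~R) -> (forall s, 0 <= y s <= c s) ->
  (forall U : {set S}, \sum_(s in U) y s <= mu U) ->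
  exists f, is_base mu f /\ forall s, y s <= f s <= c s.
Proof.
move=> hb hc hy hU; have [HT H0] := Hfromb hb hc.
have hm : mu setT - \sum_s y s <= (absz (mu setT - \sum_s y s)%R)%:Z by lia.
have := @augment S mu hsub c HT H0 _ y hy hU hm. done.
Qed.

Lemma base_real (f : {ffun S -> int}) : is_base mu f -> in_Bmu mu [ffun s => ((f s)%:~R : R)].
Proof.
case/is_baseP=> h0 hU hS; split; [|split].
- by move=> s; rewrite ffunE ler0z.
- by move=> U; rewrite (eq_bigr (fun s => (f s)%:~R)) => [|s _]; rewrite ?ffunE // -intr_sumU ler_int.
- by rewrite (eq_bigr (fun s => (f s)%:~R)) => [|s _]; rewrite ?ffunE // -intr_sumT hS.
Qed.

Lemma charN (k : nat) (s0 : S) (x : {ffun S -> int}) :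
  in_mink mu (@in_Nabla S R) k x <->
  exists f, [/\ is_base mu f, (forall s, x s <= f s) & \sum_s x s = mu setT - k%:Z].
Proof.
split.
  case=> b [d [hb [[hd0 hd1] hx]]].
  have hb' := hb; case: hb' => b0 [bU bS].
  have dle s : d s <= 0 by have := hd0 s; rewrite ffunE oppr_ge0.
  have xb s : (x s)%:~R <= b s.
    by rewrite hx gerDl; apply: mulr_ge0_le0.
  have bsing s : b s <= (mu [set s])%:~R by have := bU [set s]; rewrite big_set1.
  pose y := [ffun s => if 0 <= x s then x s else 0].
  have yb s : ((y s)%:~R : R) <= b s.
    rewrite ffunE; case: ifP => _; [exact: xb | by rewrite b0].
  have [f [bf hf]] : exists f, is_base mu f /\ forall s, y s <= f s <= mu [set s].
    apply: (aug_from (b := b)) => //.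
    - move=> s; apply/andP; split; first by rewrite ffunE; case: ifP => // /negbT; rewrite -ltNge => /ltW.
      by rewrite -(ler_int R); apply: le_trans (yb s) (bsing s).
    - move=> U; rewrite -(ler_int R) intr_sumU; apply: le_trans (bU U).
      by apply: ler_sum => s _; exact: yb.
  exists f; split=> //.
    move=> s; case/andP: (hf s) => ys _; apply: le_trans ys; rewrite ffunE.
    by case: ifP => // /negbT; rewrite -ltNge => /ltW.
  apply: (@intr_inj R); rewrite intr_sumT intrB -bS -[(k%:Z)%:~R]/(k%:R).
  rewrite (eq_bigr (fun s => b s + k%:R * d s)) // big_split /= -mulr_sumr.
  have -> : \sum_s d s = -1.
    by rewrite -hd1 -sumrN; apply: eq_bigr => s _; rewrite ffunE opprK.
  by rewrite mulrN1.
case=> f [bf hx hs].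
exists [ffun s => ((f s)%:~R : R)].
case: k hs => [|k] hs.
  have ex : forall s, x s = f s.
    move=> s; have h := @psumr_eq0P _ _ predT (fun s => f s - x s).
    have : f s - x s = 0; last by lia.
    apply: h => //; first by move=> t _; have := hx t; lia.
    case/is_baseP: bf => _ _ fS; rewrite sumrB fS hs; lia.
  exists [ffun s => - ((s == s0)%:R)]; split; first exact: base_real.
  split; last by move=> s; rewrite !ffunE ex mul0r addr0.
  split; first by move=> s; rewrite !ffunE opprK ler0n.
  by rewrite (eq_bigr (fun s => (s == s0)%:R)) ?sum_deltaR // => s _; rewrite !ffunE opprK.
exists [ffun s => ((x s - f s)%:~R) / k.+1%:R]; split; first exact: base_real.
have k0 : (k.+1%:R : R) != 0 by rewrite pnatr_eq0.
split; last first.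
  by move=> s; rewrite !ffunE mulrC divfK // intrB addrC subrK.
split.
  by move=> s; rewrite !ffunE -mulNr divr_ge0 // -intrN ler0z; have := hx s; lia.
rewrite (eq_bigr (fun s => ((f s - x s)%:~R) / k.+1%:R)); last by move=> s _; rewrite !ffunE -mulNr -intrN opprB.
rewrite -mulr_suml -intr_sumT sumrB hs.
case/is_baseP: bf => _ _ ->.
by rewrite opprB addrC subrK -[k.+1%:R]/((k.+1)%:~R) divff.
Qed.

Lemma charD (k : nat) (s0 : S) (x : {ffun S -> int}) :
  in_mink mu (@in_Delta S R) k x <->
  exists f, [/\ is_base mu f, (forall s, f s <= x s) & \sum_s x s = mu setT + k%:Z].
Proof.
split.
  case=> b [d [hb [[hd0 hd1] hx]]].
  have hb' := hb; case: hb' => b0 [bU bS].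
  have xb s : b s <= (x s)%:~R.
    by rewrite hx lerDl; apply: mulr_ge0.
  have [f [bf hf]] : exists f, is_base mu f /\ forall s, (0 : {ffun S -> int}) s <= f s <= x s.
    apply: (aug_from (b := b)) => //.
    - move=> s; rewrite ffunE lexx /= -(ler_int R); exact: le_trans (b0 s) (xb s).
    - move=> U; rewrite -(ler_int R) intr_sumU; apply: le_trans (bU U).
      by rewrite big1 ?sumr_ge0 // => s _; rewrite ffunE.
  exists f; split=> //.
    by move=> s; case/andP: (hf s).
  apply: (@intr_inj R); rewrite intr_sumT intrD -bS -[(k%:Z)%:~R]/(k%:R).
  rewrite (eq_bigr (fun s => b s + k%:R * d s)) // big_split /= -mulr_sumr.
  by rewrite hd1 mulr1.
case=> f [bf hx hs].
exists [ffun s => ((f s)%:~R : R)].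
case: k hs => [|k] hs.
  have ex : forall s, x s = f s.
    move=> s; have h := @psumr_eq0P _ _ predT (fun s => x s - f s).
    have : x s - f s = 0; last by lia.
    apply: h => //; first by move=> t _; have := hx t; lia.
    case/is_baseP: bf => _ _ fS; rewrite sumrB fS hs; lia.
  exists [ffun s => ((s == s0)%:R)]; split; first exact: base_real.
  split; last by move=> s; rewrite !ffunE ex mul0r addr0.
  split; first by move=> s; rewrite !ffunE ler0n.
  by rewrite (eq_bigr (fun s => (s == s0)%:R)) ?sum_deltaR // => s _; rewrite !ffunE.
exists [ffun s => ((x s - f s)%:~R) / k.+1%:R]; split; first exact: base_real.
have k0 : (k.+1%:R : R) != 0 by rewrite pnatr_eq0.
split; last first.
  by move=> s; rewrite !ffunE mulrC divfK // intrB addrC subrK.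
split.
  by move=> s; rewrite !ffunE divr_ge0 // ler0z; have := hx s; lia.
rewrite (eq_bigr (fun s => ((x s - f s)%:~R) / k.+1%:R)); last by move=> s _; rewrite !ffunE.
rewrite -mulr_suml -intr_sumT sumrB hs.
case/is_baseP: bf => _ _ ->.
by rewrite addrC addKr -[k.+1%:R]/((k.+1)%:~R) divff.
Qed.
End Real.
Section Comb. Local Open Scope nat_scope.
Lemma hockey m k : \sum_(0 <= i < k.+1) 'C((i + m).-1, i) = 'C(k + m, k).
Proof.
elim: k => [|k IH]; first by rewrite big_nat1 !bin0.
rewrite big_nat_recr //= IH addSn /= binS addnC.
by [].  
Qed.

Lemma hockey2 m k K : k <= K ->
  \sum_(i < K.+1) (if i <= k then 'C((k - i + m).-1, k - i) else 0) = 'C(k + m, k).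
Proof.
move=> kK; rewrite -(big_mkord xpredT (fun i => if i <= k then 'C((k - i + m).-1, k - i) else 0)).
rewrite (big_cat_nat _ (n := k.+1)) //=.
rewrite [X in _ + X]big1_seq ?addn0; last first.
  by move=> i /andP[_]; rewrite mem_index_iota => /andP[h _]; rewrite leqNgt h.
rewrite (eq_big_nat _ _ (F2 := fun i => 'C((k - i + m).-1, k - i))); last first.
  by move=> i /andP[_]; rewrite ltnS => ->.
rewrite big_nat_rev /= -hockey; apply: eq_big_nat => i /andP[_ hi].
by rewrite add0n subSS subKn // -ltnS.
Qed.

Section Comp.
Variable T : finType.
Variable K : nat.

Definition compP (D : {set T}) (k : nat) (c : {ffun T -> 'I_K.+1}) :=
  [forall s, ((c s : nat) != 0) ==> (s \in D)] && (\sum_s (c s : nat) == k).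

Lemma card_comp m : forall (D : {set T}) k, #|D| = m -> k <= K ->
  #|[pred c | compP D k c]| = 'C((k + m).-1, k).
Proof.
elim: m => [|m IH] D k hD kK.
  have D0 : D = set0 by apply/eqP; rewrite -cards_eq0 hD.
  pose c0 : {ffun T -> 'I_K.+1} := [ffun=> ord0].
  have hc c : compP D k c -> c = c0.
    case/andP=> /forallP h _; apply/ffunP => s; rewrite ffunE; apply: val_inj => /=.
    by have := h s; rewrite D0 inE implybF negbK => /eqP.
  have s0 : \sum_s (c0 s : nat) = 0 by rewrite big1 // => s _; rewrite ffunE.
  case: k kK hc => [|k] kK hc.
    rewrite (@eq_card _ _ (pred1 c0)) ?card1 ?bin0 //.
    move=> c; rewrite !inE; apply/idP/eqP => [/hc //|->].
    by rewrite /compP s0 eqxx andbT; apply/forallP => s; rewrite ffunE.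
  rewrite addn0 /= bin_small // (@eq_card0 _ [pred c | compP D k.+1 c]) //.
  by move=> c; rewrite !inE; apply/negP => h; move: (h); rewrite (hc _ h) /compP s0 andbF.
have [a aD] : exists a, a \in D.
  by apply/set0Pn; rewrite -card_gt0 hD.
pose D' := D :\ a.
have hD' : #|D'| = m by move: hD; rewrite (cardsD1 a D) aD add1n => -[].
rewrite -sum1_card (partition_big (fun c : {ffun T -> 'I_K.+1} => c a) (fun _ => true)) //=.
under eq_bigr => i _.
  rewrite sum1_card.
  over.
rewrite addnS /= -(hockey2 m kK).
apply: eq_bigr => i _ /=.
case: leqP => ik; last first.
  apply: eq_card0 => c; rewrite !inE; apply/negP => /andP[/andP[_ /eqP hs] /eqP ca].
  move: ik; rewrite -ca -hs (bigD1 a) //=; lia.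
rewrite -(IH D' (k - i)) //; last by lia.
pose ins (c' : {ffun T -> 'I_K.+1}) : {ffun T -> 'I_K.+1} := [ffun t => if t == a then i else c' t].
have sumD (c : {ffun T -> 'I_K.+1}) : \sum_s (c s : nat) = c a + \sum_(s | s != a) (c s : nat).
  by rewrite (bigD1 a).
rewrite -[X in _ = X](@card_in_imset _ _ ins).
  apply: eq_card => c; change ((c \in [pred c | compP D k c]) && (c a == i) = (c \in [set ins x | x in [pred c | compP D' (k - i) c]])); rewrite [c \in [pred _ | _]]inE; apply/idP/imsetP.
    case/andP=> /andP[/forallP hsup /eqP hs] /eqP ca.
    exists [ffun t => if t == a then ord0 else c t].
      rewrite inE /compP; apply/andP; split.
        apply/forallP => t; rewrite ffunE; case: (eqVneq t a) => [-> //|ta].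
        by apply/implyP => h; rewrite !inE ta /=; exact: (implyP (hsup t) h).
      rewrite sumD ffunE eqxx /= add0n.
      rewrite (eq_bigr (fun s => (c s : nat))); last by move=> t /negbTE ta; rewrite ffunE ta.
      apply/eqP; move: hs; rewrite sumD ca; slia.
    apply/ffunP => t; rewrite !ffunE; case: eqP => [->|_] //; by rewrite ffunE.
  case=> c' /[!inE] /andP[/forallP hsup /eqP hs] ->.
  have c'a : (c' a : nat) = 0.
    by apply/eqP; apply: contraT => h; have := implyP (hsup a) h; rewrite !inE eqxx.
  rewrite /compP ffunE eqxx eqxx andbT; apply/andP; split.
    apply/forallP => t; rewrite ffunE; case: (eqVneq t a) => [->|ta]; first by rewrite aD implybT.
    by apply/implyP => h; have := implyP (hsup t) h; rewrite !inE => /andP[].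
  rewrite sumD ffunE eqxx.
  rewrite (eq_bigr (fun s => (c' s : nat))); last by move=> t /negbTE ta; rewrite ffunE ta.
  apply/eqP; move: hs; rewrite sumD c'a; slia.
move=> c1 c2; rewrite !inE => /andP[/forallP h1 _] /andP[/forallP h2 _] e.
apply/ffunP => t; have := congr1 (fun f : {ffun T -> 'I_K.+1} => f t) e; rewrite /= !ffunE.
case: eqP => [->|_ //] _; apply: val_inj.
have z (c : {ffun T -> 'I_K.+1}) : [forall s, ((c s : nat) != 0) ==> (s \in D')] -> (c a : nat) = 0.
  by move=> /forallP h; apply/eqP; apply: contraT => hh; have := implyP (h a) hh; rewrite !inE eqxx.
by rewrite /= !z //; apply/forallP.
Qed.
End Comp.
End Comb.

Section Count.
Variable S : finType.
Variable mu : {set S} -> int.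

Lemma sumPosz (I : finType) (P : pred I) (F : I -> nat) :
  ((\sum_(i | P i) F i)%N)%:Z = \sum_(i | P i) (F i)%:Z.
Proof. by rewrite (big_morph Posz PoszD (erefl _)). Qed.

Lemma toZ_inj N : injective (@toZ S N).
Proof.
move=> g1 g2 e; apply/ffunP => s; apply: val_inj.
by have := congr1 (fun f : {ffun S -> int} => f s) e; rewrite /toZ !ffunE => -[].
Qed.

Lemma base_cand (f : {ffun S -> int}) : is_base mu f ->
  exists g : {ffun S -> 'I_(bbound mu).+1}, toZ g = f.
Proof.
case/is_baseP=> h0 hU _.
exists [ffun s => inord (absz (f s))]; apply/ffunP => s; rewrite /toZ !ffunE inordK.
  by have := h0 s; lia.
have := hU [set s]; rewrite big_set1 => hs.
have := @leq_bigmax S (fun s => `|mu [set s]|%N) s; rewrite /bbound; have := h0 s; lia.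
Qed.

Lemma lift_c (k : nat) (c : {ffun S -> int}) : (forall s, 0 <= c s) -> \sum_s c s = k%:Z ->
  exists c' : {ffun S -> 'I_k.+1}, toZ c' = c.
Proof.
move=> h0 hs.
exists [ffun s => inord (absz (c s))]; apply/ffunP => s; rewrite /toZ !ffunE inordK.
  by have := h0 s; lia.
have : c s <= \sum_s c s.
  by rewrite (bigD1 s) //= lerDl; apply: sumr_ge0 => t _.
have := h0 s; rewrite hs; lia.
Qed.

Lemma count_gen (k : nat) (sg : int) (sg2 : sg * sg = 1)
  (act : {ffun S -> int} -> {set S}) (Q : {ffun S -> int} -> Prop) :
  (forall x, Q x -> exists f c : {ffun S -> int}, [/\ is_base mu f, (forall s, 0 <= c s),
     (forall s, c s != 0 -> s \in act f), \sum_s c s = k%:Z & forall s, x s = f s + sg * c s]) ->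
  (forall f1 f2 c1 c2 : {ffun S -> int}, is_base mu f1 -> is_base mu f2 ->
     (forall s, 0 <= c1 s) -> (forall s, 0 <= c2 s) ->
     (forall s, c1 s != 0 -> s \in act f1) -> (forall s, c2 s != 0 -> s \in act f2) ->
     \sum_s c1 s = k%:Z -> \sum_s c2 s = k%:Z ->
     (forall s, f1 s + sg * c1 s = f2 s + sg * c2 s) -> f1 = f2) ->
  (forall f c : {ffun S -> int}, is_base mu f -> (forall s, 0 <= c s) ->
     (forall s, c s != 0 -> s \in act f) -> \sum_s c s = k%:Z ->
     Q [ffun s => f s + sg * c s]) ->
  exists ps : seq {ffun S -> int}, [/\ uniq ps, (forall x, x \in ps <-> Q x) &
    size ps = (\sum_(g : {ffun S -> 'I_(bbound mu).+1} | is_base mu (toZ g))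
                 'C((k + #|act (toZ g)|).-1, k))%N].
Proof.
move=> H1 H2 H3.
pose P1 (g : {ffun S -> 'I_(bbound mu).+1}) := is_base mu (toZ g).
pose P2 (g : {ffun S -> 'I_(bbound mu).+1}) (c : {ffun S -> 'I_k.+1}) := compP (act (toZ g)) k c.
pose A := [pred p : {ffun S -> 'I_(bbound mu).+1} * {ffun S -> 'I_k.+1} | P1 p.1 && P2 p.1 p.2].
pose phi (p : {ffun S -> 'I_(bbound mu).+1} * {ffun S -> 'I_k.+1}) :=
  [ffun s => toZ p.1 s + sg * toZ p.2 s].
have P2P g c : P2 g c -> [/\ (forall s, 0 <= toZ c s),
     (forall s, toZ c s != 0 -> s \in act (toZ g)) & \sum_s toZ c s = k%:Z].
  case/andP=> /forallP hsup /eqP hs; split.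
  - by move=> s; rewrite /toZ ffunE.
  - by move=> s; rewrite /toZ ffunE => h; apply: (implyP (hsup s)).
  - transitivity (Posz (\sum_s (c s : nat))); last by rewrite hs.
    by rewrite sumPosz; apply: eq_bigr => s _; rewrite /toZ ffunE.
exists (map phi (enum A)); split.
- rewrite map_inj_in_uniq ?enum_uniq // => -[g1 c1] [g2 c2].
  rewrite !mem_enum !inE /= => /andP[b1 p1] /andP[b2 p2] e.
  have [c10 c1a c1s] := P2P _ _ p1; have [c20 c2a c2s] := P2P _ _ p2.
  have es s : toZ g1 s + sg * toZ c1 s = toZ g2 s + sg * toZ c2 s.
    by have := congr1 (fun f : {ffun S -> int} => f s) e; rewrite /phi !ffunE.
  have eg := H2 _ _ _ _ b1 b2 c10 c20 c1a c2a c1s c2s es.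
  have eg' := toZ_inj eg; subst g2; congr pair; apply: toZ_inj; apply/ffunP => s.
  have := es s => /addrI /(congr1 (fun z => sg * z)); by rewrite !mulrA sg2 !mul1r.
- move=> x; split.
    case/mapP=> -[g c]; rewrite mem_enum !inE /= => /andP[b p] ->.
    have [c0 ca cs] := P2P _ _ p; exact: H3.
  case/H1=> f [c [bf c0 ca cs hx]].
  have [g eg] := base_cand bf; have [c' ec] := lift_c c0 cs.
  apply/mapP; exists (g, c').
    rewrite mem_enum !inE /= /P1 eg bf /=; apply/andP; split.
      apply/forallP => s; apply/implyP => h; rewrite eg; apply: ca.
      by rewrite -ec /toZ ffunE.
    rewrite -eqz_nat sumPosz -cs -ec; apply/eqP; apply: eq_bigr => s _.
    by rewrite /toZ ffunE.
  by apply/ffunP => s; rewrite /phi ffunE /= eg ec hx.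
rewrite size_map -cardE -sum1_card.
rewrite (eq_bigl (fun p => P1 p.1 && P2 p.1 p.2)) //.
rewrite -(pair_big_dep P1 P2 (fun _ _ => 1%N)) /=.
apply: eq_bigr => g bg; rewrite sum1_card.
exact: card_comp.
Qed.

Lemma conv (k : nat) (act : {ffun S -> int} -> {set S}) (P : pred {ffun S -> 'I_(bbound mu).+1}) :
  (forall g, P g -> (0 < #|act (toZ g)|)%N) ->
  (\sum_(g | P g) 'C((k + #|act (toZ g)|).-1, k))%N =
  (\sum_(j < #|S|) #|[set g | P g && ((#|S| - #|act (toZ g)|)%N == j)]| *
       'C(k + #|S|.-1 - j, #|S|.-1 - j))%N.
Proof.
move=> hP.
under [RHS]eq_bigr => j _.
  rewrite -sum_nat_const big_mkcond /=.
  over.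
rewrite /= exchange_big /= [LHS]big_mkcond /=; apply: eq_bigr => g _.
case: (boolP (P g)) => Pg; last first.
  by rewrite big1 // => j _; rewrite inE (negbTE Pg).
have a0 := hP g Pg; have an : (#|act (toZ g)| <= #|S|)%N by apply: max_card.
have lt : (#|S| - #|act (toZ g)| < #|S|)%N by lia.
rewrite (bigD1 (Ordinal lt)) //= inE Pg eqxx /= big1 ?addn0; last first.
  move=> j /negbTE nj; rewrite inE Pg /=.
  case: eqP => // e; move: nj; by rewrite -(inj_eq val_inj) /= e eqxx.
set a := #|act (toZ g)|; set n := #|S|.
have -> : (n.-1 - (n - a) = (k + a).-1 - k)%N by lia.
have -> : (k + n.-1 - (n - a) = (k + a).-1)%N by lia.
by rewrite bin_sub //; lia.
Qed.
End Count.

Lemma int_act_pos (S : finType) mu (r : S -> nat) (s0 : S) (f : {ffun S -> int}) :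
  (0 < #|[set s | int_active r mu f s]|)%N.
Proof.
case: (@arg_minnP S s0 xpredT r isT) => sm _ hm.
apply/card_gt0P; exists sm; rewrite inE /int_active; apply/existsPn => s'.
by have := hm s' isT; rewrite leqNgt => /negbTE ->.
Qed.

Lemma ext_act_pos (S : finType) mu (r : S -> nat) (s0 : S) (f : {ffun S -> int}) :
  (0 < #|[set s | ext_active r mu f s]|)%N.
Proof.
case: (@arg_minnP S s0 xpredT r isT) => sm _ hm.
apply/card_gt0P; exists sm; rewrite inE /ext_active; apply/existsPn => s'.
by have := hm s' isT; rewrite leqNgt => /negbTE ->.
Qed.

Lemma sum_shift (S : finType) (f c : {ffun S -> int}) (sg : int) :
  \sum_s [ffun s => f s + sg * c s] s = \sum_s f s + sg * \sum_s c s.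
Proof. by rewrite mulr_sumr -big_split; apply: eq_bigr => s _; rewrite ffunE. Qed.

Unset Implicit Arguments.

Theorem theorem2p10 (R : realType) (S : finType) (mu : {set S} -> int)
  (r : S -> nat) (r_inj : injective r)
  (hsub : submodular mu) (hmon : mu_nondecreasing mu) (k : nat) :
  (exists ps : seq {ffun S -> int}, uniq ps /\
     (forall x, x \in ps <-> in_mink mu (@in_Nabla S R) k x) /\
     size ps = (\sum_(j < #|S|) interior_coef r mu j *
                  'C(k + #|S|.-1 - j, #|S|.-1 - j))%N) /\
  (exists ps : seq {ffun S -> int}, uniq ps /\
     (forall x, x \in ps <-> in_mink mu (@in_Delta S R) k x) /\
     size ps = (\sum_(j < #|S|) exterior_coef r mu j *
                  'C(k + #|S|.-1 - j, #|S|.-1 - j))%N).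
Proof.
case: (pickP (fun _ : S => true)) => [s0 _|hS]; last first.
  have S0 : #|S| = 0%N by apply: eq_card0 => s; have := hS s.
  have sum0 (F : S -> R) : \sum_s F s = 0 by apply: big1 => s; have := hS s.
  split; exists [::]; (split; [by []|split; [|by rewrite S0 big_ord0]]);
    move=> x; split=> //; case=> b [d [_ [[_ hd] _]]]; by move: hd; rewrite sum0 => /eqP; rewrite eq_sym oner_eq0.
split.
  pose act (f : {ffun S -> int}) := [set s | int_active r mu f s].
  edestruct (@count_gen S mu k (-1) (ltac:(by rewrite mulrNN mulr1)) act
    (in_mink mu (@in_Nabla S R) k)) as [ps [u hm hsz]]; last first.
    exists ps; split=> //; split=> //; rewrite hsz (conv k (P := fun g => is_base mu (toZ g))) //.
    by move=> g _; exact: int_act_pos.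
  - move=> f c bf c0 ca cs; apply/(@charN R S mu hsub k s0); exists f; split=> //.
      by move=> s; rewrite ffunE; have := c0 s; lia.
    rewrite sum_shift cs; case/is_baseP: bf => _ _ ->; lia.
  - move=> f1 f2 c1 c2 b1 b2 p1 p2 a1 a2 _ _ es.
    apply: (uniqN hsub r_inj (x := [ffun s => f1 s + -1 * c1 s])) => // s; rewrite ffunE.
    + by have := p1 s; lia.
    + by rewrite es; have := p2 s; lia.
    + move=> h; have : c1 s != 0 by apply/eqP; move: h; lia.
      by move/a1; rewrite inE.
    + rewrite es => h; have : c2 s != 0 by apply/eqP; move: h; lia.
      by move/a2; rewrite inE.
  - move=> x hQ; have [f [bf hx hs]] := proj1 (@charN R S mu hsub k s0 x) hQ.
    have [f' [bf' hx' g']] := goodN_ex (r := r) (m := (absz (Vz r f)).+1) bf hx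
      (ltac:(have := Vz_ge0 r (f := f); case/is_baseP: bf => h _ _; move/(_ h); lia)).
    exists f', [ffun s => f' s - x s]; split=> //.
    + by move=> s; rewrite ffunE subr_ge0.
    + move=> s; rewrite ffunE inE => h; apply: g'; have := hx' s; move: h => /eqP; lia.
    + rewrite (eq_bigr (fun s => f' s - x s)); last by move=> s _; rewrite ffunE.
      rewrite sumrB; case/is_baseP: bf' => _ _ ->; rewrite hs; lia.
    + by move=> s; rewrite ffunE; lia.
pose act (f : {ffun S -> int}) := [set s | ext_active r mu f s].
edestruct (@count_gen S mu k 1 (ltac:(by rewrite mulr1)) act
  (in_mink mu (@in_Delta S R) k)) as [ps [u hm hsz]]; last first.
  exists ps; split=> //; split=> //; rewrite hsz (conv k (P := fun g => is_base mu (toZ g))) //.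
  by move=> g _; exact: ext_act_pos.
- move=> f c bf c0 ca cs; apply/(@charD R S mu hsub k s0); exists f; split=> //.
    by move=> s; rewrite ffunE; have := c0 s; lia.
  rewrite sum_shift cs; case/is_baseP: bf => _ _ ->; lia.
- move=> f1 f2 c1 c2 b1 b2 p1 p2 a1 a2 _ _ es.
  apply: (uniqD hsub r_inj (x := [ffun s => f1 s + 1 * c1 s])) => // s; rewrite ffunE.
  + by have := p1 s; lia.
  + by rewrite es; have := p2 s; lia.
  + move=> h; have : c1 s != 0 by apply/eqP; move: h; lia.
    by move/a1; rewrite inE.
  + rewrite es => h; have : c2 s != 0 by apply/eqP; move: h; lia.
    by move/a2; rewrite inE.
- move=> x hQ; have [f [bf hx hs]] := proj1 (@charD R S mu hsub k s0 x) hQ.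
  have [f' [bf' hx' g']] := goodD_ex (r := r) (m := (absz (Vz r x - Vz r f)).+1) bf hx
    (ltac:(have := Vz_le r hx; lia)).
  exists f', [ffun s => x s - f' s]; split=> //.
  + by move=> s; rewrite ffunE subr_ge0.
  + move=> s; rewrite ffunE inE => h; apply: g'; have := hx' s; move: h => /eqP; lia.
  + rewrite (eq_bigr (fun s => x s - f' s)); last by move=> s _; rewrite ffunE.
      rewrite sumrB; case/is_baseP: bf' => _ _ ->; rewrite hs; lia.
  + by move=> s; rewrite ffunE; lia.
Qed.
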